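(* Let $\mathcal A=\{a_1,\dots,a_m\}\subseteq(\mathbb Z^d)^*$ be vectors such that there exist $\lambda_1,\dots,\lambda_m\ge0$, not all $0$, with $\sum_i\lambda_ia_i=0$, let $A$ be the $m\times d$ matrix with rows $a_1,\dots,a_m$, let $\mathbf 1\in\mathbb R^m$ be the all-ones vector, and let $\varepsilon>0$. Then the set \[ \{c\in\mathbb R\mid 0<c\le\varepsilon^{-1}\text{ and } Ax+c\mathbf 1\in\mathbb Z^m\text{ for some }x\in\mathbb R^d\} \] is finite. Moreover, if $P$ is a $d$-dimensional lattice polytope with core normals $a_1,\dots,a_m$ and $c=\operatorname{qcd}(P)^{-1}$, then there is a rational $y$ with $Ay+c\mathbf 1\in\mathbb Z^m$.
   Context: A $d$-dimensional lattice polytope is written $P=\{x\in\mathbb R^d\mid \langle a_i,x\rangle\le b_i,\ 1\le i\le n\}$ with an irredundant system, primitive $a_i\in(\mathbb Z^d)^*$ and (since $P$ is a lattice polytope) integers $b_i$. For rational $c>0$, $P^{(c)}=\{x\mid \langle a_i,x\rangle\le b_i-c\ \forall i\}$; $\operatorname{qcd}(P)^{-1}=\max\{c>0\mid P^{(c)}\ne\emptyset\}$; with $c_0=\operatorname{qcd}(P)^{-1}$, $\operatorname{core}P=P^{(c_0)}$, and the core normals are those $a_i$ with $\langle a_i,y\rangle=b_i-c_0$ for all $y\in\operatorname{core}P$. *)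

(* Defs.v *)
(* Ambient ordered field: an arbitrary archimedean field R
   (the real numbers are the intended instance). *)
From HB Require Import structures.
From mathcomp Require Import all_boot all_order all_algebra.
Set Implicit Arguments. Unset Strict Implicit. Unset Printing Implicit Defensive.
Import Order.TTheory GRing.Theory Num.Theory.
Local Open Scope ring_scope.

Definition pair_row (R : archiRealFieldType) (n d : nat) (a : 'M[int]_(n, d))
  (i : 'I_n) (x : 'cV[R]_d) : R :=
  \sum_(j < d) (a i j)%:~R * x j ord0.

Definition shift_int (R : archiRealFieldType) (m d : nat) (A : 'M[int]_(m, d))
  (x : 'cV[R]_d) (c : R) : Prop :=
  forall i : 'I_m, pair_row A i x + c \is a Num.int.

Definition pos_dependent (R : archiRealFieldType) (m d : nat) (A : 'M[int]_(m, d)) : Prop :=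
  exists lam : 'I_m -> R,
    (forall i, 0 <= lam i) /\ (exists i, lam i != 0) /\
    (forall j : 'I_d, \sum_(i < m) lam i * (A i j)%:~R = 0).
Arguments pos_dependent R {m d} A.

Definition polyH (R : archiRealFieldType) (n d : nat) (a : 'M[int]_(n, d))
  (b : 'I_n -> R) (x : 'cV[R]_d) : Prop :=
  forall i, pair_row a i x <= b i.

Definition intb (R : archiRealFieldType) (n : nat) (b : 'cV[int]_n) : 'I_n -> R :=
  fun i => (b i ord0)%:~R.

Definition polyC (R : archiRealFieldType) (n d : nat) (a : 'M[int]_(n, d))
  (b : 'cV[int]_n) (c : rat) (x : 'cV[R]_d) : Prop :=
  polyH a (fun i => intb R b i - ratr c) x.
Arguments polyC R {n d} a b c x.

Definition in_conv (R : archiRealFieldType) (d : nat) (V : seq 'cV[int]_d)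
  (x : 'cV[R]_d) : Prop :=
  exists t : 'I_(size V) -> R,
    (forall k, 0 <= t k) /\ \sum_k t k = 1 /\
    x = \sum_k t k *: map_mx (fun z : int => z%:~R) (nth 0 V k).

Definition lattice_polytope (R : archiRealFieldType) (d : nat)
  (P : 'cV[R]_d -> Prop) : Prop :=
  exists V : seq 'cV[int]_d, forall x, P x <-> in_conv V x.

Definition full_dim (R : archiRealFieldType) (d : nat) (P : 'cV[R]_d -> Prop) : Prop :=
  exists p : 'I_d.+1 -> 'cV[R]_d,
    (forall k, P (p k)) /\
    \rank (\matrix_(i < d) (p (lift ord0 i) - p ord0)^T) = d.

Definition irredundant (R : archiRealFieldType) (n d : nat) (a : 'M[int]_(n, d))
  (b : 'cV[int]_n) : Prop :=
  forall j : 'I_n, exists x : 'cV[R]_d,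
    (forall i, i != j -> pair_row a i x <= intb R b i) /\
    ~ (pair_row a j x <= intb R b j).
Arguments irredundant R {n d} a b.

Definition primitive_rows (n d : nat) (a : 'M[int]_(n, d)) : Prop :=
  forall i : 'I_n, \big[gcdn/0%N]_(j < d) `|a i j|%N = 1%N.

Definition is_qcd_inv (R : archiRealFieldType) (n d : nat) (a : 'M[int]_(n, d))
  (b : 'cV[int]_n) (c0 : rat) : Prop :=
  0 < c0 /\ (exists x, polyC R a b c0 x) /\
  (forall c : rat, 0 < c -> (exists x, polyC R a b c x) -> c <= c0).
Arguments is_qcd_inv R {n d} a b c0.

Definition core_normal (R : archiRealFieldType) (n d : nat) (a : 'M[int]_(n, d))
  (b : 'cV[int]_n) (c0 : rat) (i : 'I_n) : Prop :=
  forall y : 'cV[R]_d, polyC R a b c0 y -> pair_row a i y = intb R b i - ratr c0.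
Arguments core_normal R {n d} a b c0 i.

Definition rat_vec (R : archiRealFieldType) (d : nat) (y : 'cV[R]_d) : Prop :=
  exists q : 'cV[rat]_d, y = map_mx (fun r : rat => ratr r) q.

(* Main.v *)
Require Import Defs.
From HB Require Import structures.
From mathcomp Require Import all_boot all_order all_algebra.
Import Order.TTheory GRing.Theory Num.Theory.
Local Open Scope ring_scope.

Lemma rat_sol (R : archiRealFieldType) (p q : nat) (M : 'M[rat]_(p,q)) (v : 'rV[rat]_q)
  (x : 'rV[R]_p) :
  (forall j, \sum_i x 0 i * ratr (M i j) = ratr (v 0 j)) ->
  exists y : 'rV[rat]_p, forall j, \sum_i y 0 i * M i j = v 0 j.
Proof.
move=> H.
have E : x *m map_mx (@ratr R) M = map_mx (@ratr R) v.
  by apply/rowP => j; rewrite !mxE -H; apply: eq_bigr => i _; rewrite mxE.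
have : (map_mx (@ratr R) v <= map_mx (@ratr R) M)%MS by rewrite -E submxMl.
rewrite map_submx => /submxP [y Hy]; exists y => j.
by rewrite Hy mxE.
Qed.


Lemma ratr_intP (R : archiRealFieldType) (z : rat) : z \is a Num.int -> ratr z \is a @Num.int R.
Proof. by move=> Hz; rewrite -(Num.Theory.floorK Hz) rmorph_int rpred_int. Qed.

Lemma part1 (R : archiRealFieldType) (d : nat) (m : nat) (A : 'M[int]_(m, d)) :
  pos_dependent R A ->
     forall eps : R, 0 < eps ->
       exists s : seq R, forall c : R,
         (0 < c /\ c <= eps^-1 /\ exists x : 'cV[R]_d, shift_int A x c) ->
         c \in s.
Proof.
move=> [lam [Hl0 [[i0 Hi0] HA]]] eps heps.
pose L := \sum_i lam i.
have L0 : 0 < L.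
  rewrite /L (bigD1 i0) //=; apply: (@lt_le_trans _ _ (lam i0)).
    by rewrite lt_def Hi0 Hl0.
  by rewrite lerDl sumr_ge0.
pose M : 'M[rat]_(m, d.+1) := \matrix_(i, j) (if unlift ord_max j is Some j' then (A i j')%:~R else 1).
pose v : 'rV[rat]_d.+1 := \row_j (if unlift (@ord_max d) j is Some _ then 0 else 1).
pose x : 'rV[R]_m := \row_i (lam i / L).
have [w Hw] : exists w : 'rV[rat]_m, forall j, \sum_i w 0 i * M i j = v 0 j.
  apply: (@rat_sol R _ _ M v x) => j.
  rewrite /M /v /x mxE; case E: (unlift _ j) => [j'|].
    rewrite rmorph0; transitivity ((\sum_i lam i * (A i j')%:~R) / L); last by rewrite HA mul0r.
    rewrite mulr_suml; apply: eq_bigr => i _; rewrite !mxE E rmorph_int mulrAC //.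
  rewrite rmorph1 -[RHS](divff (lt0r_neq0 L0)) /L mulr_suml.
  by apply: eq_bigr => i _; rewrite !mxE E rmorph1 mulr1.
have HwA : forall j : 'I_d, \sum_i w 0 i * (A i j)%:~R = 0.
  move=> j; have := Hw (lift ord_max j); rewrite /M /v !mxE liftK.
  by move=> H; rewrite -[X in _ = X]H; apply: eq_bigr => i _; rewrite mxE liftK.
have Hw1 : \sum_i w 0 i = 1.
  have := Hw ord_max; rewrite /M /v !mxE unlift_none => H; rewrite -[X in _ = X]H.
  by apply: eq_bigr => i _; rewrite mxE unlift_none mulr1.
pose D : int := \prod_i denq (w 0 i).
have D0 : 0 < D by apply: prodr_gt0 => i _; apply: denq_gt0.
have wD : forall i, w 0 i * D%:~R \is a Num.int.
  move=> i; rewrite /D (bigD1 i) //= intrM mulrA -numqE.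
  by rewrite rpredM // rpred_int.
pose N := Num.truncn ((D%:~R : R) / eps).
exists [seq (k%:R / (D%:~R : R)) | k <- iota 0 N.+1].
move=> c [c0 [ceps [X HX]]].
have Hc : c = \sum_i ratr (w 0 i) * (pair_row A i X + c).
  rewrite (eq_bigr (fun i => ratr (w 0 i) * pair_row A i X + ratr (w 0 i) * c)); last by move=> i _; rewrite mulrDr.
  rewrite big_split /= -mulr_suml -rmorph_sum Hw1 rmorph1 mul1r.
  suff -> : \sum_i ratr (w 0 i) * pair_row A i X = 0 by rewrite add0r.
  rewrite /pair_row (eq_bigr (fun i => \sum_j ratr (w 0 i) * ((A i j)%:~R * X j ord0))); last by move=> i _; rewrite mulr_sumr.
  rewrite exchange_big /= big1 // => j _.
  rewrite (eq_bigr (fun i => ratr (w 0 i * (A i j)%:~R) * X j ord0)); last first.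
    by move=> i _; rewrite rmorphM /= rmorph_int mulrA.
  by rewrite -mulr_suml -rmorph_sum HwA rmorph0 mul0r.
have Dc : (D%:~R : R) * c \is a Num.nat.
  rewrite natrEint mulr_ge0 ?ler0z ?ltW // andbT Hc mulr_sumr rpred_sum // => i _.
  by rewrite mulrA -(rmorph_int (@ratr R)) -rmorphM /= rpredM ?ratr_intP // mulrC.
have Dpos : (0 : R) < D%:~R by rewrite ltr0z.
have ek := Num.Theory.truncnK Dc.
have ec : c = (Num.truncn ((D%:~R : R) * c))%:R / D%:~R.
  by rewrite ek [_ * c]mulrC mulfK // lt0r_neq0.
rewrite ec; apply/mapP; exists (Num.truncn ((D%:~R : R) * c)) => //.
rewrite mem_iota add0n ltnS; apply: Num.Theory.le_truncn.
by rewrite ler_wpM2l // ltW.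
Qed.
Lemma part2 (R : archiRealFieldType) (d : nat) (n : nat) (a : 'M[int]_(n, d)) (b : 'cV[int]_n)
  (c0 : rat) : is_qcd_inv R a b c0 ->
       exists y : 'cV[R]_d, rat_vec y /\
         forall i : 'I_n, core_normal R a b c0 i ->
           pair_row a i y + ratr c0 \is a Num.int.
Proof.
move=> [_ [[X HX] _]].
pose S i := pair_row a i X == intb R b i - ratr c0.
pose M : 'M[rat]_(d, n) := \matrix_(j, i) (if S i then (a i j)%:~R else 0).
pose v : 'rV[rat]_n := \row_i (if S i then (b i ord0)%:~R - c0 else 0).
pose x : 'rV[R]_d := \row_j X j ord0.
have [y Hy] : exists y : 'rV[rat]_d, forall i, \sum_j y 0 j * M j i = v 0 i.
  apply: (@rat_sol R _ _ M v x) => i.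
  rewrite /M /v /x !mxE; case: ifP => Si.
    rewrite rmorphB /= rmorph_int -(eqP Si) /pair_row.
    by apply: eq_bigr => j _; rewrite !mxE Si rmorph_int mulrC.
  by rewrite rmorph0 big1 // => j _; rewrite !mxE Si rmorph0 mulr0.
exists (map_mx (@ratr R) y^T); split; first by exists y^T.
move=> i Hi.
have Si : S i by apply/eqP; apply: Hi.
have := Hy i; rewrite mxE Si => Hyi.
have -> : pair_row a i (map_mx (@ratr R) y^T) = ratr ((b i ord0)%:~R - c0).
  rewrite -Hyi rmorph_sum; apply: eq_bigr => j _.
  by rewrite !mxE Si rmorphM /= rmorph_int mulrC.
by rewrite rmorphB /= rmorph_int subrK rpred_int.
Qed.

Theorem mainTheorem7 (R : archiRealFieldType) (d : nat) :
  (forall (m : nat) (A : 'M[int]_(m, d)), pos_dependent R A ->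
     forall eps : R, 0 < eps ->
       exists s : seq R, forall c : R,
         (0 < c /\ c <= eps^-1 /\ exists x : 'cV[R]_d, shift_int A x c) ->
         c \in s)
  /\
  (forall (n : nat) (a : 'M[int]_(n, d)) (b : 'cV[int]_n),
     lattice_polytope (polyH a (intb R b)) ->
     full_dim (polyH a (intb R b)) ->
     irredundant R a b ->
     primitive_rows a ->
     forall c0 : rat, is_qcd_inv R a b c0 ->
       exists y : 'cV[R]_d, rat_vec y /\
         forall i : 'I_n, core_normal R a b c0 i ->
           pair_row a i y + ratr c0 \is a Num.int).
Proof.
split; first by move=> m A; exact: part1.
by move=> n a b _ _ _ _ c0; exact: part2.
Qed.
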